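(* Let $c>0$ and let $\mathfrak{C}_c=X(\mathbb{C})\subset\widetilde{E(2)}$ be the catenoid of parameter $c$ described in the context. Then for every $\mu\in\mathbb{R}$, the intersection of $\mathfrak{C}_c$ with the plane $\{x_3=\lambda_1\lambda_2\mu\}$ is a non-empty, closed, embedded, convex curve (convex as a curve in the plane with Euclidean coordinates $(x_1,x_2)$).
   Context: $\widetilde{E(2)}$ is $\mathbb{R}^3$ with coordinates $(x_1,x_2,x_3)$ and group law $(a_1,b_1,c_1)*(a_2,b_2,c_2)=(a_1+a_2\cos c_1-b_2\sin c_1,\ b_1+a_2\sin c_1+b_2\cos c_1,\ c_1+c_2)$, with the left-invariant metric $\lambda_1^2(\cos x_3\,dx_1+\sin x_3\,dx_2)^2+\lambda_2^2(-\sin x_3\,dx_1+\cos x_3\,dx_2)^2+\frac{1}{\lambda_1^2\lambda_2^2}dx_3^2$, where either $\lambda_1>\lambda_2>0$ or $\lambda_1=\lambda_2=1$. For $c>0$: $\theta_c^+=\pi$ if $c>\sqrt2\lambda_1$, $\theta_c^+=\arccos(1-c^2/\lambda_1^2)$ if $0<c\le\sqrt2\lambda_1$; $\Omega=\{(c,\theta):c>0,\ |\theta|<\theta_c^+\}$. For $(c,\theta)\in\Omega$: $D=\sin\theta/c$; $\varphi$ is the global solution of $\varphi'(u)=\sqrt{c^2+2\cos\theta\,B(u)-D^2B(u)^2}$, $\varphi(0)=0$, with $B(u)=\lambda_1^2\cos^2\varphi(u)+\lambda_2^2\sin^2\varphi(u)$; $U>0$ is the unique number with $\varphi(U)=\pi$;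 $f$ solves $f'=DB$, $f(0)=0$; $G(u)=\int_0^u\frac{c-\varphi'(s)}{B(s)}ds$; $H(c,\theta)=Df(U)+cG(U)$; $\widetilde{\theta_c}$ is the unique $\theta\in(0,\pi/2)\cap(0,\theta_c^+)$ with $H(c,\theta)=0$. The catenoid $\mathfrak{C}_c$ is the image of $X=(x_1,x_2,x_3):\mathbb{C}\to\widetilde{E(2)}$ built with $\theta=\widetilde{\theta_c}$: $x_3(u+iv)=-\lambda_1\lambda_2Dv+\lambda_1\lambda_2G(u)$; with $A=f(u)+cv$, $M_1=c\cos x_3\cosh A-\lambda_1\lambda_2D\sin x_3\sinh A$, $M_2=c\cos x_3\sinh A-\lambda_1\lambda_2D\sin x_3\cosh A$, $M_3=c\sin x_3\sinh A+\lambda_1\lambda_2D\cos x_3\cosh A$, $M_4=c\sin x_3\cosh A+\lambda_1\lambda_2D\cos x_3\sinh A$, $x_1=-\frac{1}{(c^2+\lambda_1^2\lambda_2^2D^2)B}[\frac{1}{\lambda_1}f'\cos\varphi\,M_1-\frac{1}{\lambda_1}(c-\varphi')\sin\varphi\,M_2-\frac{1}{\lambda_2}(c-\varphi')\cos\varphi\,M_3-\frac{1}{\lambda_2}f'\sin\varphi\,M_4]$, $x_2=-\frac{1}{(c^2+\lambda_1^2\lambda_2^2D^2)B}[\frac{1}{\lambda_1}f'\cos\varphi\,M_4-\frac{1}{\lambda_1}(c-\varphi')\sin\varphi\,M_3+\frac{1}{\lambda_2}(c-\varphi')\cos\varphi\,M_2+\frac{1}{\lambda_2}f'\sin\varphi\,M_1]$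 (functions of $u$ evaluated at $u$). $X$ is a conformal minimal immersion. *)

(* Defs.v *)
From Stdlib Require Import Reals.
From Coquelicot Require Import Coquelicot.
Open Scope R_scope.

Definition theta_plus (l1 c : R) : R :=
  if Rlt_dec (sqrt 2 * l1) c then PI else acos (1 - c ^ 2 / l1 ^ 2).

Definition Dc (c th : R) : R := sin th / c.

Definition Bang (l1 l2 p : R) : R := l1 ^ 2 * (cos p) ^ 2 + l2 ^ 2 * (sin p) ^ 2.

Definition phid (l1 l2 c th p : R) : R :=
  sqrt (c ^ 2 + 2 * cos th * Bang l1 l2 p - (Dc c th) ^ 2 * (Bang l1 l2 p) ^ 2).

Definition is_phi_sol (l1 l2 c th : R) (phi : R -> R) : Prop :=
  phi 0 = 0 /\ forall u, is_derive phi u (phid l1 l2 c th (phi u)).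

Definition Bu (l1 l2 : R) (phi : R -> R) (u : R) : R := Bang l1 l2 (phi u).

Definition ff (l1 l2 c th : R) (phi : R -> R) (u : R) : R :=
  RInt (fun s => Dc c th * Bu l1 l2 phi s) 0 u.

Definition GG (l1 l2 c th : R) (phi : R -> R) (u : R) : R :=
  RInt (fun s => (c - phid l1 l2 c th (phi s)) / Bu l1 l2 phi s) 0 u.

Definition HH (l1 l2 c th : R) (phi : R -> R) (U : R) : R :=
  Dc c th * ff l1 l2 c th phi U + c * GG l1 l2 c th phi U.

(* The immersion X = (x1,x2,x3) : C = R x R -> E(2)~, z = u + i v *)
Definition X3 (l1 l2 c th : R) (phi : R -> R) (u v : R) : R :=
  - l1 * l2 * Dc c th * v + l1 * l2 * GG l1 l2 c th phi u.

Definition X12 (l1 l2 c th : R) (phi : R -> R) (u v : R) : R * R :=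
  let D := Dc c th in
  let x3 := X3 l1 l2 c th phi u v in
  let A := ff l1 l2 c th phi u + c * v in
  let B := Bu l1 l2 phi u in
  let p := phi u in
  let fp := D * B in
  let pp := phid l1 l2 c th p in
  let M1 := c * cos x3 * cosh A - l1 * l2 * D * sin x3 * sinh A in
  let M2 := c * cos x3 * sinh A - l1 * l2 * D * sin x3 * cosh A in
  let M3 := c * sin x3 * sinh A + l1 * l2 * D * cos x3 * cosh A in
  let M4 := c * sin x3 * cosh A + l1 * l2 * D * cos x3 * sinh A in
  let k := - (1 / ((c ^ 2 + l1 ^ 2 * l2 ^ 2 * D ^ 2) * B)) in
  ( k * (1 / l1 * fp * cos p * M1 - 1 / l1 * (c - pp) * sin p * M2
         - 1 / l2 * (c - pp) * cos p * M3 - 1 / l2 * fp * sin p * M4),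
    k * (1 / l1 * fp * cos p * M4 - 1 / l1 * (c - pp) * sin p * M3
         + 1 / l2 * (c - pp) * cos p * M2 + 1 / l2 * fp * sin p * M1) ).

Definition slice (l1 l2 c th : R) (phi : R -> R) (h : R) (p : R * R) : Prop :=
  exists u v, X3 l1 l2 c th phi u v = h /\ X12 l1 l2 c th phi u v = p.

(* S is a non-empty closed embedded (regular C^1, simple) convex curve in the
   Euclidean (x1,x2)-plane: the image of a T-periodic regular C^1 map that is
   injective on one period, and which has a supporting line at each point. *)
Definition closed_embedded_convex_curve (S : R * R -> Prop) : Prop :=
  exists (g1 g2 : R -> R) (T : R),
    0 < T /\
    (forall t, g1 (t + T) = g1 t /\ g2 (t + T) = g2 t) /\
    (forall s t, 0 <= s < T -> 0 <= t < T -> g1 s = g1 t -> g2 s = g2 t -> s = t) /\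
    (forall p, S p <-> exists t, p = (g1 t, g2 t)) /\
    (forall t, ex_derive g1 t /\ ex_derive g2 t /\
               continuous (Derive g1) t /\ continuous (Derive g2) t /\
               (Derive g1 t <> 0 \/ Derive g2 t <> 0)) /\
    (forall t, exists a b, (a <> 0 \/ b <> 0) /\
       forall s, a * (g1 s - g1 t) + b * (g2 s - g2 t) >= 0).

(* Main.v *)
Require Import Defs.
From Stdlib Require Import Reals.
From Coquelicot Require Import Coquelicot.
From Stdlib Require Import Lra Lia ZArith.
Open Scope R_scope.

Lemma strict_incr (g dg : R -> R) a b : a < b -> (forall x, is_derive g x (dg x)) ->
  (forall x, a < x < b -> 0 < dg x) -> g a < g b.
Proof.
  intros hab hd hp.
  destruct (MVT_cor2 g dg a b hab) as [c0 [e hc]].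
  { intros; apply is_derive_Reals; auto. }
  specialize (hp c0 hc). nra.
Qed.

Lemma strict_decr (g dg : R -> R) a b : a < b -> (forall x, is_derive g x (dg x)) ->
  (forall x, a < x < b -> dg x < 0) -> g b < g a.
Proof.
  intros hab hd hp.
  destruct (MVT_cor2 g dg a b hab) as [c0 [e hc]].
  { intros; apply is_derive_Reals; auto. }
  specialize (hp c0 hc). nra.
Qed.

Lemma const_of_zero (g : R -> R) : (forall x, is_derive g x 0) -> forall a b, g a = g b.
Proof.
  intros hd a b.
  destruct (Rtotal_order a b) as [h|[h|h]].
  - destruct (MVT_cor2 g (fun _ => 0) a b h) as [c0 [e hc]].
    { intros; apply is_derive_Reals; auto. }
    lra.
  - subst; reflexivity.
  - destruct (MVT_cor2 g (fun _ => 0) b a h) as [c0 [e hc]].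
    { intros; apply is_derive_Reals; auto. }
    lra.
Qed.

Lemma Bang_shift l1 l2 p : Bang l1 l2 (p + PI) = Bang l1 l2 p.
Proof. unfold Bang. rewrite neg_cos, neg_sin. ring. Qed.

Lemma phid_shift l1 l2 c th p : phid l1 l2 c th (p + PI) = phid l1 l2 c th p.
Proof. unfold phid. rewrite Bang_shift. reflexivity. Qed.

Lemma Bang_pos l1 l2 p : 0 < l1 -> 0 < l2 -> 0 < Bang l1 l2 p.
Proof.
  intros hl1 hl2. unfold Bang. pose proof (sin2_cos2 p) as H. unfold Rsqr in H.
  destruct (Req_dec (cos p) 0) as [e|e].
  - assert (sin p ^2 = 1) by (rewrite e in H; nra).
    rewrite H0. assert (0 < l2^2) by (apply pow_lt; auto).
    assert (0 <= l1^2 * cos p ^2) by (apply Rmult_le_pos; apply pow2_ge_0). lra.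
  - assert (0 < cos p ^ 2) by (apply pow2_gt_0; auto).
    assert (0 < l1^2) by (apply pow_lt; auto).
    assert (0 <= l2^2 * sin p ^2) by (apply Rmult_le_pos; apply pow2_ge_0).
    assert (0 < l1^2 * cos p ^2) by (apply Rmult_lt_0_compat; auto). lra.
Qed.

Lemma Bang_le l1 l2 p : 0 < l2 -> l2 <= l1 -> Bang l1 l2 p <= l1 ^ 2.
Proof.
  intros h2 h21. unfold Bang. pose proof (sin2_cos2 p) as H. unfold Rsqr in H.
  assert (l2^2 <= l1^2) by (simpl; nra).
  assert (0 <= sin p ^ 2) by apply pow2_ge_0.
  assert (l2 ^ 2 * sin p ^ 2 <= l1^2 * sin p ^2) by (apply Rmult_le_compat_r; auto).
  assert (e: l1^2 * cos p ^2 + l1^2 * sin p^2 = l1^2) by (replace (l1^2 * cos p^2 + l1^2*sin p^2) with (l1^2 * (sin p * sin p + cos p * cos p)) by ring; rewrite H; ring).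
  lra.
Qed.

Lemma radL_pos l1 c th : 0 < l1 -> 0 < c -> 0 < th < PI / 2 -> th < theta_plus l1 c ->
  0 < c ^ 2 + 2 * cos th * l1 ^ 2 - (Dc c th) ^ 2 * (l1 ^ 2) ^ 2.
Proof.
  intros hl hc hth htp.
  assert (hct : 0 < cos th) by (apply cos_gt_0; lra).
  assert (hct1 : cos th < 1).
  { rewrite <- cos_0. apply cos_decreasing_1; lra. }
  assert (key : l1 ^ 2 * (1 - cos th) < c ^ 2).
  { unfold theta_plus in htp. destruct (Rlt_dec (sqrt 2 * l1) c) as [h|h].
    - assert (hs : sqrt 2 * sqrt 2 = 2) by (apply sqrt_sqrt; lra).
      assert (0 < sqrt 2) by (apply sqrt_lt_R0; lra).
      assert (2 * l1^2 < c^2).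
      { assert (e2 : (sqrt 2 * l1) * (sqrt 2 * l1) = 2 * l1^2) by (replace ((sqrt 2 * l1) * (sqrt 2 * l1)) with ((sqrt 2 * sqrt 2) * l1^2) by ring; rewrite hs; ring).
        rewrite <- e2.
        simpl. assert (0 < sqrt 2 * l1) by nra. nra. }
      assert (0 < l1^2) by (apply pow_lt; auto). nra.
    - assert (hle : c <= sqrt 2 * l1) by lra.
      assert (hs : sqrt 2 * sqrt 2 = 2) by (apply sqrt_sqrt; lra).
      assert (0 < sqrt 2) by (apply sqrt_lt_R0; lra).
      assert (hc2 : c^2 <= 2 * l1^2).
      { assert (e2 : (sqrt 2 * l1) * (sqrt 2 * l1) = 2 * l1^2) by (replace ((sqrt 2 * l1) * (sqrt 2 * l1)) with ((sqrt 2 * sqrt 2) * l1^2) by ring; rewrite hs; ring).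
        rewrite <- e2.
        simpl. nra. }
      assert (hl2 : 0 < l1^2) by (apply pow_lt; auto).
      set (y := 1 - c ^ 2 / l1 ^ 2) in *.
      assert (hy : -1 <= y <= 1).
      { unfold y. split.
        - assert (c^2 / l1^2 <= 2). { apply Rmult_le_reg_r with (l1^2); auto. field_simplify; lra. }
          lra.
        - assert (0 <= c^2 / l1^2). { apply Rdiv_le_0_compat; [apply pow2_ge_0| auto]. }
          lra. }
      assert (hb := acos_bound y).
      assert (cos (acos y) < cos th) by (apply cos_decreasing_1; lra).
      rewrite cos_acos in H0 by auto. unfold y in H0.
      assert (c^2 / l1^2 * l1^2 = c^2) by (field; lra). nra. }
  assert (hD : (Dc c th)^2 * c^2 = 1 - cos th ^2).
  { unfold Dc. pose proof (sin2_cos2 th). unfold Rsqr in H. field_simplify; [|lra]. nra. }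
  assert (hc2 : 0 < c^2) by (apply pow_lt; auto).
  assert (0 < l1^2) by (apply pow_lt; auto).
  apply Rmult_lt_reg_r with (c^2); auto. rewrite Rmult_0_l.
  replace ((c ^ 2 + 2 * cos th * l1 ^ 2 - Dc c th ^ 2 * (l1 ^ 2) ^ 2) * c ^ 2)
    with ((c^2 + cos th * l1^2 - l1^2) * (c^2 + cos th * l1^2 + l1^2)).
  2:{ transitivity (c^2*c^2 + 2 * cos th * l1^2 * c^2 - (Dc c th ^ 2 * c ^ 2) * (l1^2)^2); [|ring].
      rewrite hD. ring. }
  apply Rmult_lt_0_compat; nra.
Qed.

Lemma rad_pos l1 l2 c th p : 0 < l2 -> l2 <= l1 -> 0 < c -> 0 < th < PI / 2 -> th < theta_plus l1 c ->
  0 < c ^ 2 + 2 * cos th * Bang l1 l2 p - (Dc c th) ^ 2 * (Bang l1 l2 p) ^ 2.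
Proof.
  intros h2 h21 hc hth htp.
  assert (hL := radL_pos l1 c th ltac:(lra) hc hth htp).
  assert (hB := Bang_pos l1 l2 p ltac:(lra) h2).
  assert (hBL := Bang_le l1 l2 p h2 h21).
  set (B := Bang l1 l2 p) in *. set (L := l1 ^ 2) in *. set (D := Dc c th) in *.
  assert (hD2 : 0 <= D^2) by apply pow2_ge_0.
  assert (hc2 : 0 < c^2) by (apply pow_lt; auto).
  assert (h1 : D^2 * B^2 <= D^2 * B * L).
  { replace (D^2 * B^2) with (D^2 * B * B) by ring. apply Rmult_le_compat_l; [apply Rmult_le_pos; lra| lra]. }
  destruct (Rle_dec 0 (2 * cos th - D^2 * L)) as [k|k].
  - assert (0 <= B * (2 * cos th - D^2 * L)) by (apply Rmult_le_pos; lra). nra.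
  - assert (B * (2 * cos th - D^2 * L) >= L * (2 * cos th - D^2 * L)) by nra. nra.
Qed.

Lemma phid_pos l1 l2 c th p : 0 < l2 -> l2 <= l1 -> 0 < c -> 0 < th < PI / 2 -> th < theta_plus l1 c ->
  0 < phid l1 l2 c th p.
Proof. intros. unfold phid. apply sqrt_lt_R0. apply rad_pos; auto. Qed.

Lemma Phi_inv (F Phi y : R -> R) : (forall x, is_derive Phi x (/ F x)) -> (forall x, 0 < F x) ->
  Phi 0 = 0 -> (forall u, is_derive y u (F (y u))) -> y 0 = 0 -> forall u, Phi (y u) = u.
Proof.
  intros dP Fp P0 dy y0.
  assert (dh : forall u, is_derive (fun u => Phi (y u) - u) u 0).
  { intro u.
    assert (H1 := is_derive_comp Phi y u _ _ (dP (y u)) (dy u)).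
    assert (H2 := is_derive_minus _ _ u _ _ H1 (is_derive_id u)).
    assert (e : minus (scal (F (y u)) (/ F (y u))) one = 0).
    { unfold minus, plus, opp, scal, one. simpl. unfold mult. simpl.
      specialize (Fp (y u)). field_simplify; [unfold Rminus; ring| lra]. }
    rewrite <- e. exact H2. }
  intro u. pose proof (const_of_zero _ dh u 0) as e. simpl in e. rewrite y0, P0 in e. lra.
Qed.

Lemma ode_unique (F Phi y1 y2 : R -> R) : (forall x, is_derive Phi x (/ F x)) -> (forall x, 0 < F x) ->
  Phi 0 = 0 -> (forall u, is_derive y1 u (F (y1 u))) -> y1 0 = 0 ->
  (forall u, is_derive y2 u (F (y2 u))) -> y2 0 = 0 -> forall u, y1 u = y2 u.
Proof.
  intros dP Fp P0 d1 e1 d2 e2 u.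
  assert (h1 := Phi_inv F Phi y1 dP Fp P0 d1 e1 u).
  assert (h2 := Phi_inv F Phi y2 dP Fp P0 d2 e2 u).
  assert (inc : forall a b, a < b -> Phi a < Phi b).
  { intros a b hab. apply (strict_incr Phi (fun x => / F x)); auto.
    intros x _. apply Rinv_0_lt_compat; auto. }
  destruct (Rtotal_order (y1 u) (y2 u)) as [h|[h|h]]; auto.
  - specialize (inc _ _ h). lra.
  - specialize (inc _ _ h). lra.
Qed.

Definition Good l1 l2 c th := 0 < l2 /\ l2 <= l1 /\ 0 < c /\ 0 < th < PI / 2 /\ th < theta_plus l1 c.

Lemma rad_posG l1 l2 c th p : Good l1 l2 c th ->
  0 < c ^ 2 + 2 * cos th * Bang l1 l2 p - (Dc c th) ^ 2 * (Bang l1 l2 p) ^ 2.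
Proof. intros (?&?&?&?&?). apply rad_pos; auto. Qed.

Lemma phid_posG l1 l2 c th p : Good l1 l2 c th -> 0 < phid l1 l2 c th p.
Proof. intros (?&?&?&?&?). apply phid_pos; auto. Qed.

Lemma cont_of_ex (f : R -> R) x : ex_derive f x -> continuous f x.
Proof. intro H. exact (@ex_derive_continuous R_AbsRing R_NormedModule f x H). Qed.

Ltac radtac l1 l2 c th p hg :=
  let H := fresh in pose proof (rad_posG l1 l2 c th p hg) as H; unfold Bang, Dc in H; simpl in H |- *; lra.

Lemma inv_phid_cont l1 l2 c th p : Good l1 l2 c th -> continuous (fun p => / phid l1 l2 c th p) p.
Proof.
  intro hg. apply cont_of_ex. unfold phid.
  assert (H := phid_posG l1 l2 c th p hg). unfold phid in H.
  unfold Bang, Dc in *. auto_derive. split; [|split; auto].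
  - radtac l1 l2 c th p hg.
  - simpl in *. unfold Rminus in *. lra.
Qed.

Lemma RInt_correct_R (f : R -> R) a b : (forall z, continuous f z) -> is_RInt f a b (RInt f a b).
Proof.
  intro h. apply (@RInt_correct R_CompleteNormedModule).
  apply (@ex_RInt_continuous R_CompleteNormedModule). intros; apply h.
Qed.

Lemma is_derive_RInt_R (f : R -> R) y : (forall z, continuous f z) ->
  is_derive (fun y => RInt f 0 y) y (f y).
Proof.
  intro h. apply (@is_derive_RInt R_NormedModule f _ 0 y).
  - apply filter_forall. intro b. apply RInt_correct_R; auto.
  - apply h.
Qed.

Definition PhiF l1 l2 c th (y : R) := RInt (fun p => / phid l1 l2 c th p) 0 y.

Lemma PhiF_deriv l1 l2 c th y : Good l1 l2 c th -> is_derive (PhiF l1 l2 c th) y (/ phid l1 l2 c th y).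
Proof.
  intro hg. unfold PhiF.
  apply (is_derive_RInt_R (fun p => / phid l1 l2 c th p)).
  intros; apply inv_phid_cont; auto.
Qed.

Lemma phi_shift l1 l2 c th U phi : Good l1 l2 c th -> is_phi_sol l1 l2 c th phi -> phi U = PI ->
  forall u, phi (u + U) = phi u + PI.
Proof.
  intros hg [p0 dphi] pU u.
  assert (d1 : forall u, is_derive (fun u => phi (u + U) - PI) u (phid l1 l2 c th (phi (u + U) - PI))).
  { intro v. assert (ex : ex_derive phi (v + U)) by (eexists; apply dphi).
    auto_derive; auto.
    replace (Derive (fun x => phi x) (v + U)) with (phid l1 l2 c th (phi (v + U)))
      by (symmetry; apply is_derive_unique; apply dphi).
    replace (phi (v + U)) with ((phi (v + U) - PI) + PI) at 1 by ring.
    rewrite phid_shift. ring. }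
  assert (e := ode_unique (phid l1 l2 c th) (PhiF l1 l2 c th) (fun u => phi (u + U) - PI) phi
     (fun y => PhiF_deriv l1 l2 c th y hg) (fun x => phid_posG l1 l2 c th x hg)
     ltac:(unfold PhiF; exact (@RInt_point R_CompleteNormedModule 0 _)) d1 ltac:(simpl; rewrite Rplus_0_l, pU; ring) dphi p0 u).
  simpl in e. lra.
Qed.

Lemma is_derive_val (f : R -> R) x l l' : is_derive f x l -> l = l' -> is_derive f x l'.
Proof. intros H e; subst; exact H. Qed.

Lemma shift_int (g : R -> R) U : (forall z, continuous g z) -> (forall s, g (s + U) = g s) ->
  forall u, RInt g 0 (u + U) = RInt g 0 u + RInt g 0 U.
Proof.
  intros hc hp.
  assert (dh : forall u, is_derive (fun u => RInt g 0 (u + U) - RInt g 0 u - RInt g 0 U) u 0).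
  { intro u.
    assert (H1 := is_derive_comp (fun y => RInt g 0 y) (fun u => u + U) u _ _ (is_derive_RInt_R g (u + U) hc)
                   (is_derive_plus _ _ u _ _ (is_derive_id u) (is_derive_const U u))).
    assert (H2 := is_derive_minus _ _ u _ _ H1 (is_derive_RInt_R g u hc)).
    assert (H3 := is_derive_minus _ _ u _ _ H2 (is_derive_const (RInt g 0 U) u)).
    apply (is_derive_val _ _ _ _ H3).
    rewrite hp. unfold minus, plus, opp, scal, one, zero. simpl. unfold mult. simpl. ring. }
  intro u. pose proof (const_of_zero _ dh u 0) as e. simpl in e.
  rewrite Rplus_0_l in e.
  rewrite (@RInt_point R_CompleteNormedModule 0 g) in e. simpl in e. unfold zero in e. simpl in e. lra.
Qed.

Lemma intf_cont l1 l2 c th (phi : R -> R) z : (forall u, ex_derive phi u) ->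
  continuous (fun s => Dc c th * Bu l1 l2 phi s) z.
Proof.
  intro hd. apply cont_of_ex. unfold Bu, Bang. auto_derive. repeat split; auto.
Qed.

Lemma intG_cont l1 l2 c th (phi : R -> R) z : Good l1 l2 c th -> (forall u, ex_derive phi u) ->
  continuous (fun s => (c - phid l1 l2 c th (phi s)) / Bu l1 l2 phi s) z.
Proof.
  intros hg hd. apply cont_of_ex.
  assert (H1 := rad_posG l1 l2 c th (phi z) hg).
  assert (H2 : 0 < Bang l1 l2 (phi z)) by (destruct hg as (?&?&?&?&?); apply Bang_pos; lra).
  unfold Bu, phid, Bang, Dc in *. simpl in H1, H2. unfold Rminus in H1.
  auto_derive. repeat split; auto; simpl; unfold Rminus; lra.
Qed.

Lemma ff_deriv l1 l2 c th (phi : R -> R) u : (forall u, ex_derive phi u) ->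
  is_derive (ff l1 l2 c th phi) u (Dc c th * Bu l1 l2 phi u).
Proof.
  intro hd. unfold ff. apply (is_derive_RInt_R (fun s => Dc c th * Bu l1 l2 phi s)).
  intros; apply intf_cont; auto.
Qed.

Lemma GG_deriv l1 l2 c th (phi : R -> R) u : Good l1 l2 c th -> (forall u, ex_derive phi u) ->
  is_derive (GG l1 l2 c th phi) u ((c - phid l1 l2 c th (phi u)) / Bu l1 l2 phi u).
Proof.
  intros hg hd. unfold GG. apply (is_derive_RInt_R (fun s => (c - phid l1 l2 c th (phi s)) / Bu l1 l2 phi s)).
  intros; apply intG_cont; auto.
Qed.

Lemma ff_shift l1 l2 c th U (phi : R -> R) : Good l1 l2 c th -> is_phi_sol l1 l2 c th phi -> phi U = PI ->
  forall u, ff l1 l2 c th phi (u + U) = ff l1 l2 c th phi u + ff l1 l2 c th phi U.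
Proof.
  intros hg hs pU. assert (hd : forall u, ex_derive phi u) by (intro; eexists; apply (proj2 hs)).
  unfold ff. apply shift_int.
  - intros; apply intf_cont; auto.
  - intro s. unfold Bu. rewrite (phi_shift l1 l2 c th U phi hg hs pU), Bang_shift. reflexivity.
Qed.

Lemma GG_shift l1 l2 c th U (phi : R -> R) : Good l1 l2 c th -> is_phi_sol l1 l2 c th phi -> phi U = PI ->
  forall u, GG l1 l2 c th phi (u + U) = GG l1 l2 c th phi u + GG l1 l2 c th phi U.
Proof.
  intros hg hs pU. assert (hd : forall u, ex_derive phi u) by (intro; eexists; apply (proj2 hs)).
  unfold GG. apply shift_int.
  - intros; apply intG_cont; auto.
  - intro s. unfold Bu. rewrite (phi_shift l1 l2 c th U phi hg hs pU), Bang_shift, phid_shift. reflexivity.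
Qed.

Definition RR l1 l2 c ct D p := c ^ 2 + 2 * ct * Bang l1 l2 p - D ^ 2 * (Bang l1 l2 p) ^ 2.

Definition Z1e l1 l2 c ct D cx sx p A :=
  - (1 / ((c ^ 2 + l1 ^ 2 * l2 ^ 2 * D ^ 2) * Bang l1 l2 p)) *
  (1 / l1 * (D * Bang l1 l2 p) * cos p * (c * cx * cosh A - l1 * l2 * D * sx * sinh A)
   - 1 / l1 * (c - sqrt (RR l1 l2 c ct D p)) * sin p * (c * cx * sinh A - l1 * l2 * D * sx * cosh A)
   - 1 / l2 * (c - sqrt (RR l1 l2 c ct D p)) * cos p * (c * sx * sinh A + l1 * l2 * D * cx * cosh A)
   - 1 / l2 * (D * Bang l1 l2 p) * sin p * (c * sx * cosh A + l1 * l2 * D * cx * sinh A)).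

Lemma core1 l1 l2 c ct D cx sx (phi A : R -> R) u :
  0 < l1 -> 0 < l2 -> 0 < c -> 0 < D -> 0 < RR l1 l2 c ct D (phi u) ->
  is_derive phi u (sqrt (RR l1 l2 c ct D (phi u))) ->
  is_derive A u (D * Bang l1 l2 (phi u) + c * (c - sqrt (RR l1 l2 c ct D (phi u))) / (Bang l1 l2 (phi u) * D)) ->
  is_derive (fun u => Z1e l1 l2 c ct D cx sx (phi u) (A u)) u
    ((D^2 * (Bang l1 l2 (phi u))^2 + (c - sqrt (RR l1 l2 c ct D (phi u)))^2) * cosh (A u)
      / (l1 * l2 * (Bang l1 l2 (phi u))^2 * D) *
     (cx * l2 * sin (phi u) + sx * l1 * cos (phi u))).
Proof.
  intros hl1 hl2 hc hD hR dphi dA.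
  assert (hB := Bang_pos l1 l2 (phi u) hl1 hl2).
  assert (hq := sqrt_lt_R0 _ hR).
  assert (hqq := sqrt_sqrt _ (Rlt_le _ _ hR)).
  assert (Ep : Derive (fun x => phi x) u = sqrt (RR l1 l2 c ct D (phi u))) by (apply is_derive_unique; exact dphi).
  assert (EA : Derive (fun x => A x) u = D * Bang l1 l2 (phi u) + c * (c - sqrt (RR l1 l2 c ct D (phi u))) / (Bang l1 l2 (phi u) * D)) by (apply is_derive_unique; exact dA).
  assert (exp : ex_derive phi u) by (eexists; exact dphi).
  assert (exA : ex_derive A u) by (eexists; exact dA).
  revert hR hqq hq hB Ep EA.
  unfold Z1e, RR, Bang.
  intros hR hqq hq hB Ep EA.
  auto_derive.
  - repeat split; auto; try (simpl; nra).
    apply Rmult_integral_contrapositive; split; simpl; nra.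
  - rewrite Ep, EA. clear Ep EA dphi dA exp exA.
    pose proof (sin2_cos2 (phi u)) as hsc. unfold Rsqr in hsc.
    set (q := sqrt _) in *.
    set (cp := cos (phi u)) in *. set (sp := sin (phi u)) in *.
    set (ch := cosh (A u)) in *. set (sh := sinh (A u)) in *.
    clearbody q cp sp ch sh.
    set (S := sp * sp + cp * cp).
    set (K := l1 * l2 * D).
    set (B := l1 ^ 2 * cp ^ 2 + l2 ^ 2 * sp ^ 2) in *.
    set (N := D ^ 2 * B ^ 2 + (c - q) ^ 2).
    transitivity (- (N / B) / ((c^2 + K^2) * l1 * l2 * B * D) *
       (cx * (l1 * cp * (c * K * (S - 1)) * sh - l2 * sp * (c^2 + K^2 * S) * ch)
        - sx * (l1 * cp * (c^2 + K^2 * S) * ch + l2 * sp * (c * K * (S - 1)) * sh))).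
    2: { unfold S. rewrite hsc. field. unfold K. repeat split; try lra.
         assert (0 < c^2) by (apply pow_lt; lra). assert (0 <= (l1*l2*D)^2) by apply pow2_ge_0. lra. }
    assert (ect : ct = (q*q - c^2 + D^2 * B^2) / (2 * B)).
    { rewrite hqq. field. lra. }
    subst ct. clear hqq. unfold N, K, S, B.
    field.
    repeat split; try lra.
    - replace ((l1 * cp) ^ 2 + (l2 * sp) ^ 2) with B by (unfold B; ring). lra.
    - assert (0 < c^2) by (apply pow_lt; lra). assert (0 <= (l1*l2*D)^2) by apply pow2_ge_0. lra.
Qed.

Definition vv l1 l2 c th phi mu u := (GG l1 l2 c th phi u - mu) / Dc c th.
Definition Aof l1 l2 c th phi mu u := ff l1 l2 c th phi u + c * vv l1 l2 c th phi mu u.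
Definition g1 l1 l2 c th phi mu u := fst (X12 l1 l2 c th phi u (vv l1 l2 c th phi mu u)).
Definition g2 l1 l2 c th phi mu u := snd (X12 l1 l2 c th phi u (vv l1 l2 c th phi mu u)).

Lemma X3_vv l1 l2 c th phi mu u : Dc c th <> 0 -> X3 l1 l2 c th phi u (vv l1 l2 c th phi mu u) = l1 * l2 * mu.
Proof. intro h. unfold X3, vv. field. auto. Qed.

Lemma g1_eq l1 l2 c th phi mu u : Dc c th <> 0 ->
  g1 l1 l2 c th phi mu u = Z1e l1 l2 c (cos th) (Dc c th) (cos (l1 * l2 * mu)) (sin (l1 * l2 * mu)) (phi u) (Aof l1 l2 c th phi mu u).
Proof.
  intro h. unfold g1, X12. cbv zeta. cbn [fst]. rewrite X3_vv by auto.
  unfold Z1e, RR, phid, Bu, Aof. reflexivity.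
Qed.

Lemma g2_eq l1 l2 c th phi mu u : Dc c th <> 0 ->
  g2 l1 l2 c th phi mu u = Z1e l1 l2 c (cos th) (Dc c th) (sin (l1 * l2 * mu)) (- cos (l1 * l2 * mu)) (phi u) (Aof l1 l2 c th phi mu u).
Proof.
  intro h. unfold g2, X12. cbv zeta. cbn [snd]. rewrite X3_vv by auto.
  unfold Z1e, RR, phid, Bu, Aof. ring.
Qed.

Lemma Dc_pos c th : 0 < c -> 0 < th < PI / 2 -> 0 < Dc c th.
Proof. intros hc hth. unfold Dc. apply Rdiv_lt_0_compat; auto. apply sin_gt_0; lra. Qed.

Lemma Aof_deriv l1 l2 c th phi mu u : Good l1 l2 c th -> is_phi_sol l1 l2 c th phi ->
  is_derive (Aof l1 l2 c th phi mu) u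
   (Dc c th * Bang l1 l2 (phi u) + c * (c - sqrt (RR l1 l2 c (cos th) (Dc c th) (phi u))) / (Bang l1 l2 (phi u) * Dc c th)).
Proof.
  intros hg hs. assert (hd : forall u, ex_derive phi u) by (intro; eexists; apply (proj2 hs)).
  assert (hD : 0 < Dc c th) by (destruct hg as (?&?&?&?&?); apply Dc_pos; auto).
  assert (hB : 0 < Bang l1 l2 (phi u)) by (destruct hg as (?&?&?&?&?); apply Bang_pos; lra).
  assert (d1 := ff_deriv l1 l2 c th phi u hd).
  assert (d2 := GG_deriv l1 l2 c th phi u hg hd).
  unfold Aof, vv.
  assert (e1 : ex_derive (ff l1 l2 c th phi) u) by (eexists; exact d1).
  assert (e2 : ex_derive (GG l1 l2 c th phi) u) by (eexists; exact d2).
  auto_derive; try (repeat split; auto; lra).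
  all: replace (Derive (fun x => ff l1 l2 c th phi x) u) with (Dc c th * Bu l1 l2 phi u)
      by (symmetry; apply is_derive_unique; exact d1).
  all: replace (Derive (fun x => GG l1 l2 c th phi x) u) with ((c - phid l1 l2 c th (phi u)) / Bu l1 l2 phi u)
      by (symmetry; apply is_derive_unique; exact d2).
  all: unfold Bu, phid, RR; field; split; lra.
Qed.

Definition rho l1 l2 c th phi mu u :=
  (Dc c th ^ 2 * (Bang l1 l2 (phi u)) ^ 2 + (c - phid l1 l2 c th (phi u)) ^ 2) * cosh (Aof l1 l2 c th phi mu u)
   / (l1 * l2 * (Bang l1 l2 (phi u)) ^ 2 * Dc c th).

Lemma g_deriv l1 l2 c th phi mu u cx sx : Good l1 l2 c th -> is_phi_sol l1 l2 c th phi ->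
  is_derive (fun u => Z1e l1 l2 c (cos th) (Dc c th) cx sx (phi u) (Aof l1 l2 c th phi mu u)) u
    (rho l1 l2 c th phi mu u * (cx * l2 * sin (phi u) + sx * l1 * cos (phi u))).
Proof.
  intros hg hs.
  assert (hD : 0 < Dc c th) by (destruct hg as (?&?&?&?&?); apply Dc_pos; auto).
  destruct hg as (h2&h21&hc&hth&htp) eqn:E.
  apply core1; try lra.
  - apply (rad_posG l1 l2 c th (phi u) hg).
  - apply (proj2 hs).
  - apply Aof_deriv; auto.
Qed.

Lemma g1_deriv l1 l2 c th phi mu u : Good l1 l2 c th -> is_phi_sol l1 l2 c th phi ->
  is_derive (g1 l1 l2 c th phi mu) u
    (rho l1 l2 c th phi mu u * (cos (l1 * l2 * mu) * l2 * sin (phi u) + sin (l1 * l2 * mu) * l1 * cos (phi u))).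
Proof.
  intros hg hs.
  assert (hD : 0 < Dc c th) by (destruct hg as (?&?&?&?&?); apply Dc_pos; auto).
  eapply is_derive_ext; [| apply g_deriv; auto].
  intro t. simpl. rewrite g1_eq; auto. lra.
Qed.

Lemma g2_deriv l1 l2 c th phi mu u : Good l1 l2 c th -> is_phi_sol l1 l2 c th phi ->
  is_derive (g2 l1 l2 c th phi mu) u
    (rho l1 l2 c th phi mu u * (sin (l1 * l2 * mu) * l2 * sin (phi u) + - cos (l1 * l2 * mu) * l1 * cos (phi u))).
Proof.
  intros hg hs.
  assert (hD : 0 < Dc c th) by (destruct hg as (?&?&?&?&?); apply Dc_pos; auto).
  eapply is_derive_ext; [| apply g_deriv; auto].
  intro t. simpl. rewrite g2_eq; auto. lra.
Qed.

Lemma per_nat (F : R -> R) T : (forall x, F (x + T) = F x) -> forall n x, F (x + INR n * T) = F x.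
Proof.
  intros hp n. induction n as [|n IH]; intro x.
  - simpl. f_equal. ring.
  - rewrite S_INR. replace (x + (INR n + 1) * T) with ((x + INR n * T) + T) by ring.
    rewrite hp. apply IH.
Qed.

Lemma per_int (F : R -> R) T : (forall x, F (x + T) = F x) -> forall k x, F (x + IZR k * T) = F x.
Proof.
  intros hp k x. destruct (Z_le_gt_dec 0 k) as [h|h].
  - rewrite <- (Z2Nat.id k h). rewrite <- INR_IZR_INZ. apply per_nat; auto.
  - assert (h' : (0 <= - k)%Z) by lia.
    assert (e : IZR k = - INR (Z.to_nat (- k))).
    { rewrite INR_IZR_INZ, Z2Nat.id by auto. rewrite opp_IZR. ring. }
    rewrite e. rewrite <- (per_nat F T hp (Z.to_nat (-k)) (x + - INR (Z.to_nat (- k)) * T)).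
    f_equal. ring.
Qed.

Lemma periodic_reduce (F : R -> R) T t s : 0 < T -> (forall x, F (x + T) = F x) ->
  exists r, t <= r < t + T /\ F s = F r.
Proof.
  intros hT hp.
  set (k := Int_part ((s - t) / T)).
  destruct (base_Int_part ((s - t) / T)) as [b1 b2]. fold k in b1, b2.
  exists (s - IZR k * T). split.
  - assert (IZR k * T <= (s - t) / T * T) by (apply Rmult_le_compat_r; lra).
    assert ((s - t) / T * T - T < IZR k * T).
    { replace ((s - t) / T * T - T) with (((s - t) / T - 1) * T) by ring. apply Rmult_lt_compat_r; lra. }
    replace ((s - t) / T * T) with (s - t) in * by (field; lra). lra.
  - rewrite <- (per_int F T hp k (s - IZR k * T)). f_equal. ring.
Qed.

Lemma cross_id l1 l2 cx sx p q : cx * cx + sx * sx = 1 ->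
  (cx * l2 * sin p + sx * l1 * cos p) * (sx * l2 * sin q + - cx * l1 * cos q)
  - (sx * l2 * sin p + - cx * l1 * cos p) * (cx * l2 * sin q + sx * l1 * cos q)
  = l1 * l2 * sin (q - p).
Proof.
  intro h. rewrite sin_minus.
  transitivity ((cx * cx + sx * sx) * (l1 * l2 * (sin q * cos p - cos q * sin p))); [ring|].
  rewrite h. ring.
Qed.

Lemma convex_core (g1 g2 phi r : R -> R) (l1 l2 cx sx U : R) :
  0 < l1 -> 0 < l2 -> 0 < U -> cx * cx + sx * sx = 1 ->
  (forall u, 0 < r u) ->
  (forall a b, a < b -> phi a < phi b) ->
  (forall u, phi (u + U) = phi u + PI) ->
  (forall u, is_derive g1 u (r u * (cx * l2 * sin (phi u) + sx * l1 * cos (phi u)))) ->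
  (forall u, is_derive g2 u (r u * (sx * l2 * sin (phi u) + - cx * l1 * cos (phi u)))) ->
  (forall u, g1 (u + 2 * U) = g1 u) -> (forall u, g2 (u + 2 * U) = g2 u) ->
  forall t s, t < s < t + 2 * U ->
  0 < - (sx * l2 * sin (phi t) + - cx * l1 * cos (phi t)) * (g1 s - g1 t)
      + (cx * l2 * sin (phi t) + sx * l1 * cos (phi t)) * (g2 s - g2 t).
Proof.
  intros hl1 hl2 hU hcs hr hinc hsh d1 d2 p1 p2 t s hs.
  set (a := - (sx * l2 * sin (phi t) + - cx * l1 * cos (phi t))).
  set (b := cx * l2 * sin (phi t) + sx * l1 * cos (phi t)).
  set (G := fun s => a * (g1 s - g1 t) + b * (g2 s - g2 t)).
  set (dG := fun s => r s * (l1 * l2 * sin (phi s - phi t))).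
  assert (dGd : forall x, is_derive G x (dG x)).
  { intro x. unfold G, dG.
    assert (e1 : ex_derive g1 x) by (eexists; apply d1).
    assert (e2 : ex_derive g2 x) by (eexists; apply d2).
    auto_derive; auto.
    replace (Derive (fun y => g1 y) x) with (r x * (cx * l2 * sin (phi x) + sx * l1 * cos (phi x)))
      by (symmetry; apply is_derive_unique; apply d1).
    replace (Derive (fun y => g2 y) x) with (r x * (sx * l2 * sin (phi x) + - cx * l1 * cos (phi x)))
      by (symmetry; apply is_derive_unique; apply d2).
    rewrite <- (cross_id l1 l2 cx sx (phi t) (phi x) hcs). unfold a, b. ring. }
  assert (G0 : G t = 0) by (unfold G; ring).
  assert (G2 : G (t + 2 * U) = 0) by (unfold G; rewrite p1, p2; ring).
  assert (hpos : forall x, t < x < t + U -> 0 < dG x).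
  { intros x hx. unfold dG. apply Rmult_lt_0_compat; auto.
    assert (phi t < phi x) by (apply hinc; lra).
    assert (phi x < phi (t + U)) by (apply hinc; lra).
    rewrite hsh in *. apply Rmult_lt_0_compat; [nra|]. apply sin_gt_0; lra. }
  assert (hneg : forall x, t + U < x < t + 2 * U -> dG x < 0).
  { intros x hx. unfold dG.
    assert (phi (t + U) < phi x) by (apply hinc; lra).
    assert (phi x < phi (t + U + U)) by (apply hinc; lra).
    rewrite !hsh in *.
    assert (sin (phi x - phi t) < 0) by (apply sin_lt_0; lra).
    assert (0 < l1 * l2) by nra. specialize (hr x).
    assert (0 < l1 * l2 * (- sin (phi x - phi t))) by (apply Rmult_lt_0_compat; lra).
    assert (0 < r x * (l1 * l2 * (- sin (phi x - phi t)))) by (apply Rmult_lt_0_compat; lra).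
    lra. }
  change (0 < G s).
  destruct (Rlt_le_dec s (t + U)) as [h|h].
  - rewrite <- G0. apply (strict_incr G dG); auto; try lra.
    intros; apply hpos; lra.
  - destruct (Rle_lt_dec s (t + U)) as [h'|h'].
    + assert (s = t + U) by lra. subst s.
      assert (G (t + 2 * U) < G (t + U)) by (apply (strict_decr G dG); auto; try lra; intros; apply hneg; lra).
      lra.
    + rewrite <- G2. apply (strict_decr G dG); auto; try lra.
      intros; apply hneg; lra.
Qed.

Lemma Z1e_shift l1 l2 c ct D cx sx p A :
  Z1e l1 l2 c ct D cx sx (p + PI) A = - Z1e l1 l2 c ct D cx sx p A.
Proof. unfold Z1e, RR. rewrite Bang_shift, neg_cos, neg_sin. ring. Qed.

Lemma Aof_shift l1 l2 c th U phi mu : Good l1 l2 c th -> is_phi_sol l1 l2 c th phi -> phi U = PI ->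
  HH l1 l2 c th phi U = 0 -> forall u, Aof l1 l2 c th phi mu (u + U) = Aof l1 l2 c th phi mu u.
Proof.
  intros hg hs pU hH u.
  assert (hD : 0 < Dc c th) by (destruct hg as (?&?&?&?&?); apply Dc_pos; auto).
  unfold Aof, vv. rewrite (ff_shift l1 l2 c th U phi hg hs pU), (GG_shift l1 l2 c th U phi hg hs pU).
  unfold HH in hH.
  apply Rminus_diag_uniq.
  transitivity ((Dc c th * ff l1 l2 c th phi U + c * GG l1 l2 c th phi U) / Dc c th); [field; lra|].
  rewrite hH. field. lra.
Qed.

Lemma g1_shift l1 l2 c th U phi mu : Good l1 l2 c th -> is_phi_sol l1 l2 c th phi -> phi U = PI ->
  HH l1 l2 c th phi U = 0 -> forall u, g1 l1 l2 c th phi mu (u + U) = - g1 l1 l2 c th phi mu u.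
Proof.
  intros hg hs pU hH u.
  assert (hD : 0 < Dc c th) by (destruct hg as (?&?&?&?&?); apply Dc_pos; auto).
  rewrite !g1_eq by lra. rewrite (phi_shift l1 l2 c th U phi hg hs pU), (Aof_shift l1 l2 c th U phi mu hg hs pU hH).
  apply Z1e_shift.
Qed.

Lemma g2_shift l1 l2 c th U phi mu : Good l1 l2 c th -> is_phi_sol l1 l2 c th phi -> phi U = PI ->
  HH l1 l2 c th phi U = 0 -> forall u, g2 l1 l2 c th phi mu (u + U) = - g2 l1 l2 c th phi mu u.
Proof.
  intros hg hs pU hH u.
  assert (hD : 0 < Dc c th) by (destruct hg as (?&?&?&?&?); apply Dc_pos; auto).
  rewrite !g2_eq by lra. rewrite (phi_shift l1 l2 c th U phi hg hs pU), (Aof_shift l1 l2 c th U phi mu hg hs pU hH).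
  apply Z1e_shift.
Qed.

Lemma cosh_gt0 x : 0 < cosh x.
Proof. unfold cosh. assert (0 < exp x) by apply exp_pos. assert (0 < exp (- x)) by apply exp_pos. lra. Qed.

Lemma rho_pos l1 l2 c th phi mu u : Good l1 l2 c th -> 0 < rho l1 l2 c th phi mu u.
Proof.
  intro hg.
  assert (hD : 0 < Dc c th) by (destruct hg as (?&?&?&?&?); apply Dc_pos; auto).
  assert (hB : 0 < Bang l1 l2 (phi u)) by (destruct hg as (?&?&?&?&?); apply Bang_pos; lra).
  destruct hg as (h2&h21&_&_&_).
  unfold rho. apply Rdiv_lt_0_compat.
  - apply Rmult_lt_0_compat; [|apply cosh_gt0].
    assert (0 < Dc c th ^ 2) by (apply pow_lt; lra).
    assert (0 < Bang l1 l2 (phi u) ^ 2) by (apply pow_lt; lra).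
    assert (0 < Dc c th ^ 2 * Bang l1 l2 (phi u) ^ 2) by (apply Rmult_lt_0_compat; lra).
    assert (0 <= (c - phid l1 l2 c th (phi u)) ^ 2) by apply pow2_ge_0. lra.
  - assert (0 < Bang l1 l2 (phi u) ^ 2) by (apply pow_lt; lra).
    assert (0 < l1 * l2) by (apply Rmult_lt_0_compat; lra).
    assert (0 < l1 * l2 * Bang l1 l2 (phi u) ^ 2) by (apply Rmult_lt_0_compat; lra).
    apply Rmult_lt_0_compat; lra.
Qed.

Lemma rhoT_cont l1 l2 c th phi mu cx sx t : Good l1 l2 c th -> is_phi_sol l1 l2 c th phi ->
  continuous (fun u => rho l1 l2 c th phi mu u * (cx * l2 * sin (phi u) + sx * l1 * cos (phi u))) t.
Proof.
  intros hg hs. apply cont_of_ex.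
  assert (hd : ex_derive phi t) by (eexists; apply (proj2 hs)).
  assert (hA : ex_derive (Aof l1 l2 c th phi mu) t) by (eexists; apply Aof_deriv; auto).
  assert (H1 := rad_posG l1 l2 c th (phi t) hg).
  assert (hD : 0 < Dc c th) by (destruct hg as (?&?&?&?&?); apply Dc_pos; auto).
  assert (H2 : 0 < Bang l1 l2 (phi t)) by (destruct hg as (?&?&?&?&?); apply Bang_pos; lra).
  assert (H3 : 0 < l1 * l2) by (destruct hg as (?&?&?&?&?); apply Rmult_lt_0_compat; lra).
  unfold rho, phid, Bang, Dc in *. simpl in H1, H2, hD. unfold Rminus in H1.
  assert (hl1 : 0 < l1) by (destruct hg as (?&?&?&?&?); lra).
  assert (hl2 : 0 < l2) by (destruct hg as (?&?&?&?&?); lra).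
  assert (hc : 0 < c) by (destruct hg as (?&?&?&?&?); lra).
  assert (hci : 0 < / c) by (apply Rinv_0_lt_compat; lra).
  assert (hsn : 0 < sin th) by (destruct hg as (?&?&?&?&?); apply sin_gt_0; lra).
  auto_derive. repeat split; auto; simpl; unfold Rminus; try lra.
  repeat apply Rmult_integral_contrapositive_currified; lra.
Qed.

Lemma T_nonzero l1 l2 cx sx p : 0 < l1 -> 0 < l2 -> cx * cx + sx * sx = 1 ->
  (cx * l2 * sin p + sx * l1 * cos p) <> 0 \/ (sx * l2 * sin p + - cx * l1 * cos p) <> 0.
Proof.
  intros h1 h2 hcs.
  destruct (Req_dec (cx * l2 * sin p + sx * l1 * cos p) 0) as [e1|e1]; [|left; auto].
  destruct (Req_dec (sx * l2 * sin p + - cx * l1 * cos p) 0) as [e2|e2]; [|right; auto].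
  exfalso.
  assert (es : l2 * sin p = 0).
  { transitivity (cx * (cx * l2 * sin p + sx * l1 * cos p) + sx * (sx * l2 * sin p + - cx * l1 * cos p)).
    - transitivity ((cx * cx + sx * sx) * (l2 * sin p)); [rewrite hcs; ring | ring].
    - rewrite e1, e2. ring. }
  assert (ec : l1 * cos p = 0).
  { transitivity (sx * (cx * l2 * sin p + sx * l1 * cos p) - cx * (sx * l2 * sin p + - cx * l1 * cos p)).
    - transitivity ((cx * cx + sx * sx) * (l1 * cos p)); [rewrite hcs; ring | ring].
    - rewrite e1, e2. ring. }
  apply Rmult_integral in es. apply Rmult_integral in ec.
  pose proof (sin2_cos2 p) as H. unfold Rsqr in H.
  destruct es as [es|es]; [lra|]. destruct ec as [ec|ec]; [lra|].
  rewrite es, ec in H. lra.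
Qed.

Theorem proposition5p5 (l1 l2 c th U : R) (phi : R -> R) :
  ((l1 > l2 /\ l2 > 0) \/ (l1 = 1 /\ l2 = 1)) ->
  0 < c ->
  (* th = theta~_c : th in (0, pi/2) /\ (0, theta_c^+) with H(c, th) = 0 *)
  0 < th < PI / 2 -> th < theta_plus l1 c ->
  is_phi_sol l1 l2 c th phi ->
  0 < U -> phi U = PI ->
  HH l1 l2 c th phi U = 0 ->
  forall mu : R,
    closed_embedded_convex_curve (slice l1 l2 c th phi (l1 * l2 * mu)).
Proof.
  intros hl hc hth htp hs hU pU hH mu.
  assert (hl2 : 0 < l2 /\ l2 <= l1) by (destruct hl as [[? ?]|[? ?]]; lra).
  destruct hl2 as [hl2 hl21].
  assert (hl1 : 0 < l1) by lra.
  assert (hg : Good l1 l2 c th) by (repeat split; auto; lra).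
  assert (hD : 0 < Dc c th) by (apply Dc_pos; auto).
  set (cx := cos (l1 * l2 * mu)). set (sx := sin (l1 * l2 * mu)).
  assert (hcs : cx * cx + sx * sx = 1).
  { pose proof (sin2_cos2 (l1 * l2 * mu)) as H. unfold Rsqr in H. unfold cx, sx. lra. }
  set (G1 := g1 l1 l2 c th phi mu). set (G2 := g2 l1 l2 c th phi mu).
  set (r := rho l1 l2 c th phi mu).
  assert (d1 : forall u, is_derive G1 u (r u * (cx * l2 * sin (phi u) + sx * l1 * cos (phi u))))
    by (intro; apply g1_deriv; auto).
  assert (d2 : forall u, is_derive G2 u (r u * (sx * l2 * sin (phi u) + - cx * l1 * cos (phi u))))
    by (intro; apply g2_deriv; auto).
  assert (hr : forall u, 0 < r u) by (intro; apply rho_pos; auto).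
  assert (hinc : forall a b, a < b -> phi a < phi b).
  { intros a b hab. apply (strict_incr phi (fun u => phid l1 l2 c th (phi u))); auto.
    - apply (proj2 hs).
    - intros; apply phid_posG; auto. }
  assert (hsh := phi_shift l1 l2 c th U phi hg hs pU).
  assert (p1 : forall u, G1 (u + 2 * U) = G1 u).
  { intro u. replace (u + 2 * U) with (u + U + U) by ring. unfold G1.
    rewrite !(g1_shift l1 l2 c th U phi mu hg hs pU hH). ring. }
  assert (p2 : forall u, G2 (u + 2 * U) = G2 u).
  { intro u. replace (u + 2 * U) with (u + U + U) by ring. unfold G2.
    rewrite !(g2_shift l1 l2 c th U phi mu hg hs pU hH). ring. }
  assert (core := convex_core G1 G2 phi r l1 l2 cx sx U hl1 hl2 hU hcs hr hinc hsh d1 d2 p1 p2).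
  exists G1, G2, (2 * U).
  split; [lra|].
  split; [intro t; split; auto|].
  split.
  { intros s t hs1 ht1 e1 e2.
    destruct (Rtotal_order s t) as [h|[h|h]]; auto.
    - specialize (core s t ltac:(lra)). rewrite e1, e2 in core. lra.
    - specialize (core t s ltac:(lra)). rewrite e1, e2 in core. lra. }
  split.
  { intro p. unfold slice. split.
    - intros (u & v & e3 & e12). exists u.
      assert (ev : v = vv l1 l2 c th phi mu u).
      { unfold X3 in e3. unfold vv. apply Rmult_eq_reg_l with (l1 * l2 * Dc c th).
        - field_simplify; [|lra]. lra.
        - apply Rgt_not_eq. apply Rmult_lt_0_compat; [apply Rmult_lt_0_compat|]; lra. }
      subst v. rewrite <- e12. unfold G1, G2, g1, g2. apply surjective_pairing.
    - intros (t & et). exists t, (vv l1 l2 c th phi mu t). split.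
      + apply X3_vv. lra.
      + rewrite et. unfold G1, G2, g1, g2. symmetry. apply surjective_pairing. }
  split.
  { intro t.
    assert (D1 : forall u, Derive G1 u = r u * (cx * l2 * sin (phi u) + sx * l1 * cos (phi u)))
      by (intro; apply is_derive_unique; apply d1).
    assert (D2 : forall u, Derive G2 u = r u * (sx * l2 * sin (phi u) + - cx * l1 * cos (phi u)))
      by (intro; apply is_derive_unique; apply d2).
    split; [eexists; apply d1|].
    split; [eexists; apply d2|].
    split.
    { apply (continuous_ext (fun u => r u * (cx * l2 * sin (phi u) + sx * l1 * cos (phi u)))).
      - intro; symmetry; apply D1.
      - apply rhoT_cont; auto. }
    split.
    { apply (continuous_ext (fun u => r u * (sx * l2 * sin (phi u) + - cx * l1 * cos (phi u)))).
      - intro; symmetry; apply D2.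
      - apply rhoT_cont; auto. }
    rewrite D1, D2. specialize (hr t).
    destruct (T_nonzero l1 l2 cx sx (phi t) hl1 hl2 hcs) as [h|h].
    - left. apply Rmult_integral_contrapositive_currified; lra.
    - right. apply Rmult_integral_contrapositive_currified; lra. }
  intro t.
  exists (- (sx * l2 * sin (phi t) + - cx * l1 * cos (phi t))), (cx * l2 * sin (phi t) + sx * l1 * cos (phi t)).
  split.
  { destruct (T_nonzero l1 l2 cx sx (phi t) hl1 hl2 hcs) as [h|h]; [right; auto | left; lra]. }
  intro s.
  set (Fn := fun s => - (sx * l2 * sin (phi t) + - cx * l1 * cos (phi t)) * (G1 s - G1 t)
      + (cx * l2 * sin (phi t) + sx * l1 * cos (phi t)) * (G2 s - G2 t)).
  change (Fn s >= 0).
  destruct (periodic_reduce Fn (2 * U) t s ltac:(lra)) as [r0 [hr0 e]].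
  { intro x. unfold Fn. rewrite p1, p2. reflexivity. }
  rewrite e. destruct (Req_dec r0 t) as [h|h].
  - subst r0. unfold Fn. right. ring.
  - left. apply core. lra.
Qed.
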